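(* Let $G=(V,E)$ be a finite simple graph with at least one vertex, $k>0$, and let $\mathcal F^*$ be the set of all stars $\{(A_1,B_1),(A_2,B_2),(A_3,B_3)\}\subseteq\vec S_k$ (elements not necessarily distinct) with $G[A_1]\cup G[A_2]\cup G[A_3]=G$. Then $\mathcal F^*$ is closed under shifting (with respect to $\vec S_k$ inside the universe $\vec U$ of oriented vertex separations of $G$): whenever $\vec s_0\in\vec S_k$ is linked to some $\vec r\le\vec s_0$ in $\vec S_k$ that is not forced by $\mathcal F^*$, then $\vec s_0$ is $\mathcal F^*$-linked to $\vec r$.
   Context: An oriented vertex separation of $G$ is an ordered pair $(A,B)$ with $A\cup B=V$ and no edge between $A\setminus B$ and $B\setminus A$. They form a universe $\vec U$ with $(A,B)\le(C,D)$ iff $A\subseteq C$, $B\supseteq D$; $(A,B)^*=(B,A)$; $(A,B)\vee(C,D)=(A\cup C,B\cap D)$; $(A,B)\wedge(C,D)=(A\cap C,B\cup D)$. $\vec S_k=\{(A,B)\in\vec U:|A\cap B|<k\}$, and $S_k$ is its set of separations $s=\{\vec s,\vec s^{\,*}\}$; write $\overleftarrow s=\vec s^{\,*}$; $s$ is degenerate if $\vec s=\overleftarrow s$; $\vec r$ is trivial if some $s\in S_k$ has $\vec r<\vec s$ and $\vec r<\overleftarrow s$. A star is a nonempty set $\sigma$ with $\vec r\le\overleftarrow s$ for all distinct $\vec r,\vec s\in\sigma$. $\mathcal F$ forces $\vec r$ if $\{\overleftarrow r\}\in\mathcal F$ or $r$ is degenerate (elements not forced by $\mathcal F^*$ are nontrivial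 and nondegenerate). For nontrivial nondegenerate $\vec r$, $\vec S_{\ge\vec r}$ is the set of all orientations of separations in $S_k$ having an orientation $\ge\vec r$, and for $\vec s_0\ge\vec r$ the shifting map $f:\vec S_{\ge\vec r}\to\vec U$ is $f(\vec s)=\vec s\vee\vec s_0$, $f(\overleftarrow s)=(\vec s\vee\vec s_0)^*$ for all $\vec s\in\vec S_{\ge\vec r}\setminus\{\overleftarrow r\}$ with $\vec s\ge\vec r$. $\vec s_0$ is linked to $\vec r$ if $\vec s_0\ge\vec r$ and $\vec s\vee\vec s_0\in\vec S_k$ for all $\vec s\in\vec S_k$ with $\vec s\ge\vec r$, $\vec s\ne\overleftarrow r$; it is $\mathcal F$-linked to $\vec r$ if moreover $f(\sigma)\in\mathcal F$ for every star $\sigma\in\mathcal F$ with $\sigma\subseteq\vec S_{\ge\vec r}\setminus\{\overleftarrow r\}$ having an element $\ge\vec r$. *)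

(* Defs.v *)
From mathcomp Require Import all_boot.
Set Implicit Arguments. Unset Strict Implicit. Unset Printing Implicit Defensive.

Section Seps.
Variables (T : finType) (e : rel T) (k : nat).

Definition osep : finType := ({set T} * {set T})%type.

Definition is_sep (x : osep) : bool :=
  (x.1 :|: x.2 == setT) &&
  [forall u, forall v, ((u \in x.1 :\: x.2) && (v \in x.2 :\: x.1)) ==> ~~ e u v].

Definition sep_le (x y : osep) : bool := (x.1 \subset y.1) && (y.2 \subset x.2).
Definition sep_lt (x y : osep) : bool := sep_le x y && (x != y).
Definition sep_inv (x : osep) : osep := (x.2, x.1).
Definition sep_join (x y : osep) : osep := (x.1 :|: y.1, x.2 :&: y.2).
Definition sep_meet (x y : osep) : osep := (x.1 :&: y.1, x.2 :|: y.2).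

Definition in_Sk (x : osep) : bool := is_sep x && (#|x.1 :&: x.2| < k).

Definition degenerate (x : osep) : bool := x == sep_inv x.

Definition trivial_sep (r : osep) : Prop :=
  exists s, in_Sk s /\ sep_lt r s /\ sep_lt r (sep_inv s).

Definition is_star (sigma : {set osep}) : bool :=
  (sigma != set0) &&
  [forall x in sigma, forall y in sigma, (x != y) ==> sep_le x (sep_inv y)].

Definition covers3 (A1 A2 A3 : {set T}) : bool :=
  [forall v, [|| v \in A1, v \in A2 | v \in A3]] &&
  [forall u, forall v, e u v ==>
     [|| (u \in A1) && (v \in A1), (u \in A2) && (v \in A2)
       | (u \in A3) && (v \in A3)]].

Definition Fstar (sigma : {set osep}) : Prop :=
  exists a1 a2 a3 : osep,
    [/\ in_Sk a1 && in_Sk a2 && in_Sk a3, sigma = [set a1; a2; a3],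
        is_star sigma & covers3 a1.1 a2.1 a3.1].

Definition forces (F : {set osep} -> Prop) (r : osep) : Prop :=
  F [set sep_inv r] \/ degenerate r.

Definition S_ge (r x : osep) : bool :=
  in_Sk x && (sep_le r x || sep_le r (sep_inv x)).

(* shifting map f (agrees with the paper's on S_{>=r} \ {r^*} for nontrivial
   nondegenerate r) *)
Definition shift (r s0 x : osep) : osep :=
  if sep_le r x then sep_join x s0 else sep_inv (sep_join (sep_inv x) s0).

Definition linked (r s0 : osep) : Prop :=
  sep_le r s0 /\
  forall s, in_Sk s -> sep_le r s -> s != sep_inv r -> in_Sk (sep_join s s0).

Definition F_linked (F : {set osep} -> Prop) (r s0 : osep) : Prop :=
  linked r s0 /\
  forall sigma : {set osep}, F sigma -> is_star sigma ->
    sigma \subset [set x | S_ge r x && (x != sep_inv r)] ->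
    (exists2 x, x \in sigma & sep_le r x) ->
    F (shift r s0 @: sigma).

Definition closed_under_shifting (F : {set osep} -> Prop) : Prop :=
  forall s0 r, in_Sk s0 -> in_Sk r -> sep_le r s0 -> ~ forces F r ->
    linked r s0 -> F_linked F r s0.

End Seps.

(* Main.v *)
Require Import Defs.
From mathcomp Require Import all_boot.
Set Implicit Arguments. Unset Strict Implicit. Unset Printing Implicit Defensive.

Lemma sep_leP (T : finType) (x y : osep T) : reflect (forall v, (v \in x.1 -> v \in y.1) /\ (v \in y.2 -> v \in x.2)) (sep_le x y).
Proof.
apply: (iffP andP) => [[/subsetP H1 /subsetP H2] v|H]; first by split; [apply H1|apply H2].
by split; apply/subsetP => v; case: (H v).
Qed.

Lemma inv_inv (T : finType) (x : osep T) : sep_inv (sep_inv x) = x.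
Proof. by case: x. Qed.

Lemma in_Sk_inv (T : finType) (e : rel T) (e_sym : symmetric e) k (x : osep T) :
  in_Sk e k (sep_inv x) = in_Sk e k x.
Proof.
rewrite /in_Sk /is_sep /= setUC setIC; congr (_ && _ && _).
apply/forallP/forallP => H u; apply/forallP => v; apply/implyP => /andP [hu hv].
- by move: (H v) => /forallP /(_ u) /implyP; rewrite hv hu e_sym; apply.
- by move: (H v) => /forallP /(_ u) /implyP; rewrite hv hu e_sym; apply.
Qed.

Theorem lemma5p3 (T : finType) (e : rel T)
  (e_sym : symmetric e) (e_irr : irreflexive e) (T_ne : 0 < #|T|)
  (k : nat) (k_pos : 0 < k) :
  closed_under_shifting e k (Fstar e k).
Proof.
move=> s0 r Hs0 Hr Hrs0 Hnf Hlink; split => //.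
move=> sigma [a1 [a2 [a3 [Hin Hsig Hstar Hcov]]]] _ Hsub [x0 Hx0 Hrx0].
have HrV : r.2 != setT.
  apply/negP => /eqP Hr2; apply: Hnf; left.
  exists (sep_inv r), (sep_inv r), (sep_inv r); split.
  - by rewrite !in_Sk_inv // Hr.
  - by apply/setP => x; rewrite !inE !orbb.
  - rewrite /is_star; apply/andP; split; first by apply/set0Pn; exists (sep_inv r); rewrite inE.
    by apply/forall_inP => x /set1P -> ; apply/forall_inP => y /set1P ->; rewrite eqxx.
  - by rewrite /covers3 /= Hr2; apply/andP; split; [apply/forallP => v; rewrite inE | apply/forallP => u; apply/forallP => v; rewrite !inE implybT].
have starP : forall a b, a \in sigma -> b \in sigma -> a != b -> sep_le a (sep_inv b).
  move=> a b ha hb nab; case/andP: Hstar => _ /forall_inP/(_ a ha)/forall_inP/(_ b hb)/implyP; exact.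
have subP : forall a, a \in sigma -> in_Sk e k a /\ (sep_le r a || sep_le r (sep_inv a)) /\ a != sep_inv r.
  by move=> a ha; move/subsetP: Hsub => /(_ a ha); rewrite inE => /andP [/andP [-> ->] ->].
have uniq : forall a b, a \in sigma -> b \in sigma -> sep_le r a -> sep_le r b -> a = b.
  move=> a b ha hb hra hrb; apply/eqP; apply/negPn/negP => nab.
  have := starP _ _ ha hb nab.
  move=> hab; have [Hb0 _] := subP b hb; move: Hb0; rewrite /in_Sk /is_sep => /andP [/andP [/eqP Hb _] _].
  move/negP: HrV; apply; apply/eqP; apply/setP => v; rewrite inE.
  have : v \in b.1 :|: b.2 by rewrite Hb inE.
  move/sep_leP: hab => /(_ v) /= [h1 h2].
  move/sep_leP: hra => /(_ v) [h3 h4].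
  move/sep_leP: hrb => /(_ v) [h5 h6].
  by rewrite inE => /orP [/h2/h4|/h6].
set f := shift r s0.
have f1 : forall a, sep_le r a -> (f a).1 = a.1 :|: s0.1.
  by move=> a ha; rewrite /f /shift ha.
have f2 : forall a, ~~ sep_le r a -> (f a).1 = a.1 :&: s0.2.
  by move=> a ha; rewrite /f /shift (negbTE ha).
have fSk : forall a, a \in sigma -> in_Sk e k (f a).
  move=> a ha; have [Ha [Hge Hne]] := subP a ha; rewrite /f /shift.
  case: ifP => hra; first by apply: Hlink.2.
  rewrite in_Sk_inv //; apply: Hlink.2; first by rewrite in_Sk_inv.
  - by move: Hge; rewrite hra.
  - apply/negP => /eqP /(congr1 (@sep_inv _)); rewrite !inv_inv => Har.
    by move: hra; rewrite Har /sep_le !subxx.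
have Hsig' : f @: sigma = [set f a1; f a2; f a3].
  by rewrite Hsig !imsetU !imset_set1.
have ina : [/\ a1 \in sigma, a2 \in sigma & a3 \in sigma].
  by rewrite Hsig !inE !eqxx /= ?orbT.
case: ina => ha1 ha2 ha3.
exists (f a1), (f a2), (f a3); split => //.
- by rewrite !fSk.
- rewrite /is_star; apply/andP; split.
    by apply/set0Pn; exists (f x0); apply/imsetP; exists x0.
  apply/forall_inP => u /imsetP [a ha ->]; apply/forall_inP => w /imsetP [b hb ->].
  apply/implyP => nfab.
  have nab : a != b by apply: contraNneq nfab => ->.
  have hab := starP _ _ ha hb nab.
  have hba : sep_le b (sep_inv a) by apply: starP => //; rewrite eq_sym.
  apply/sep_leP => v; move: hab hba => /sep_leP /(_ v) hab /sep_leP /(_ v) hba.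
  rewrite /f /shift; case: ifP => hra; case: ifP => hrb.
  1: by move: nab; rewrite (uniq _ _ ha hb hra hrb) eqxx.
  1-3: move: hab hba; rewrite /= !inE; do ! case: (_ \in _); rewrite /=; intuition (try discriminate; auto).
have gen : forall (a : osep T) v, v \in a.1 -> v \in s0.2 -> v \in (f a).1.
  move=> a v h1 h2; case: (boolP (sep_le r a)) => h; [rewrite f1 // | rewrite f2 //]; by rewrite !inE ?h1 ?h2.
have hx0 : forall v, v \in s0.1 -> v \in (f x0).1 by move=> v h; rewrite f1 // inE h orbT.
move: Hcov; rewrite /covers3 => /andP [/forallP cv /forallP ce].
have Hx : [|| x0 == a1, x0 == a2 | x0 == a3] by move: Hx0; rewrite Hsig !inE -orbA.
move: Hs0; rewrite /in_Sk /is_sep => /andP [/andP [/eqP Hs0u Hf] _].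
have inS : forall v, (v \in s0.1) || (v \in s0.2) by move=> v; rewrite -in_setU Hs0u inE.
apply/andP; split.
  apply/forallP => v; case/orP: (inS v) => h.
    by move: (hx0 v h); case/or3P: Hx => /eqP -> ->; rewrite /= ?orbT.
  by move: (cv v) => /or3P [h'|h'|h']; rewrite (gen _ _ h' h) /= ?orbT.
apply/forallP => u; apply/forallP => v; apply/implyP => euv.
move: (ce u) => /forallP /(_ v) /implyP /(_ euv) H.
have : ((u \in s0.1) && (v \in s0.1)) || ((u \in s0.2) && (v \in s0.2)).
  move: (forallP (forallP Hf u) v) (forallP (forallP Hf v) u) (inS u) (inS v).
  rewrite (e_sym v u) euv !inE.
  by do ! case: (_ \in _).
case/orP => /andP [h1 h2].
  by move: (hx0 u h1) (hx0 v h2); case/or3P: Hx => /eqP -> -> ->; rewrite /= ?orbT.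
by move: H => /or3P [/andP [h3 h4]|/andP [h3 h4]|/andP [h3 h4]]; rewrite (gen _ _ h3 h1) (gen _ _ h4 h2) /= ?orbT.
Qed.
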